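(* Let $n\geq 1$ and $d\geq 1$ be integers. Then $d\in A_n$ if and only if $k(n,d)\geq |r(n,d)|+1$.
   Context: A walk is a finite sequence $z_0,z_1,\dots,z_l$ of Gaussian integers with $|z_{j+1}-z_j|=1$ for all $0\le j<l$. For natural numbers $n,d$, $n$ is called $d$-avoidable if there exists a walk $(z_j)$ and indices $r,s$ with $z_r-z_s=n$ such that $z_t-z_u\neq d$ for all indices $t,u$. $A_n$ denotes the set of all $d\in\mathbb{N}$ such that $n$ is not $d$-avoidable. For integers $n$ and $d\ge1$, $k(n,d)$ and $r(n,d)$ are the unique integers with $n=k(n,d)\,d+r(n,d)$ and $r(n,d)\in\left[-\lfloor d/2\rfloor,\ \lceil d/2\rceil-1\right]$. *)

(* Defs.v *)
From Stdlib Require Import ZArith List Lia.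
Import ListNotations.
Open Scope Z_scope.

Definition gauss := (Z * Z)%type.

Definition gsub (a b : gauss) : gauss := (fst a - fst b, snd a - snd b).

Definition gnorm2 (z : gauss) : Z := fst z * fst z + snd z * snd z.

Definition gofZ (m : Z) : gauss := (m, 0).

Definition is_walk (w : list gauss) : Prop :=
  w <> [] /\
  forall j : nat, (S j < length w)%nat ->
    gnorm2 (gsub (nth (S j) w (0,0)) (nth j w (0,0))) = 1.

Definition avoidable (n d : Z) : Prop :=
  exists w : list gauss, is_walk w /\
    (exists r s : nat, (r < length w)%nat /\ (s < length w)%nat /\
       gsub (nth r w (0,0)) (nth s w (0,0)) = gofZ n) /\
    (forall t u : nat, (t < length w)%nat -> (u < length w)%nat ->
       gsub (nth t w (0,0)) (nth u w (0,0)) <> gofZ d).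

Definition A (n : Z) (d : Z) : Prop := 1 <= d /\ ~ avoidable n d.

(* Main.v *)
Require Import Defs.
From Stdlib Require Import ZArith Lia List Bool Arith.
Import ListNotations.
Open Scope Z_scope.

Lemma unit_abs (a b : Z) : a*a + b*b <= 1 -> Z.abs a + Z.abs b <= 1.
Proof.
  intros H. assert (Z.abs a <= a*a) by (destruct (Z.eq_dec a 0); [subst; simpl; lia|nia]).
  assert (Z.abs b <= b*b) by (destruct (Z.eq_dec b 0); [subst; simpl; lia|nia]).
  destruct (Z.eq_dec a 0), (Z.eq_dec b 0); subst; simpl in *; nia.
Qed.

Fixpoint cnt (P : nat -> bool) (lo m : nat) : nat :=
  match m with
  | O => O
  | S m' => (cnt P lo m' + (if P (lo + m')%nat then 1 else 0))%nat
  end.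

Lemma cnt_ext P Q lo m :
  (forall i, (lo <= i < lo + m)%nat -> P i = Q i) -> cnt P lo m = cnt Q lo m.
Proof.
  induction m; simpl; intros H; auto.
  rewrite IHm by (intros; apply H; lia). rewrite H by lia. reflexivity.
Qed.

Lemma cnt_parity b lo m :
  Nat.odd (cnt (fun i => xorb (b i) (b (S i))) lo m) = xorb (b lo) (b (lo + m)%nat).
Proof.
  induction m; simpl.
  - rewrite Nat.add_0_r. destruct (b lo); reflexivity.
  - rewrite Nat.odd_add, IHm. replace (S (lo + m)) with (lo + S m)%nat by lia.
    destruct (b lo), (b (lo+m)%nat), (b (lo + S m)%nat); reflexivity.
Qed.

Lemma cnt_or R P Q lo m :
  (forall i, (lo <= i < lo+m)%nat -> R i = P i || Q i /\ P i && Q i = false) ->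
  cnt R lo m = (cnt P lo m + cnt Q lo m)%nat.
Proof.
  induction m; simpl; intros H; auto.
  rewrite IHm by (intros; apply H; lia).
  destruct (H (lo + m)%nat) as [H1 H2]; [lia|].
  rewrite H1. destruct (P (lo+m)%nat), (Q (lo+m)%nat); simpl in *; try discriminate; lia.
Qed.

Lemma cnt_false P lo m :
  (forall i, (lo <= i < lo+m)%nat -> P i = false) -> cnt P lo m = O.
Proof.
  induction m; simpl; intros H; auto.
  rewrite IHm by (intros; apply H; lia). rewrite H by lia. reflexivity.
Qed.

Ltac bdestr :=
  repeat match goal with
  | |- context [Z.eqb ?a ?b] => destruct (Z.eqb_spec a b); try (exfalso; lia)
  | |- context [Z.ltb ?a ?b] => destruct (Z.ltb_spec a b); try (exfalso; lia)
  | |- context [Z.leb ?a ?b] => destruct (Z.leb_spec a b); try (exfalso; lia)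
  end.

Definition cr (f : nat -> Z*Z) (D y x : Z) (i : nat) : bool :=
  xorb (y <=? snd (f i)) (y <=? snd (f (S i))) && (x <? fst (f i) + D).
Definition cross f D lo m y x := cnt (cr f D y x) lo m.
Definition Lv (l y : Z) := if l <? y then y else l + 1.
Definition side f D lo m l (z : Z*Z) := Nat.odd (cross f D lo m (Lv l (snd z)) (fst z)).
Definition offt (f : nat -> Z*Z) D lo m (z : Z*Z) :=
  forall i, (lo <= i <= lo + m)%nat -> ~ (fst z = fst (f i) + D /\ snd z = snd (f i)).
Definition lazyw (f : nat -> Z*Z) lo m := forall i, (lo <= i < lo + m)%nat ->
  Z.abs (fst (f (S i)) - fst (f i)) + Z.abs (snd (f (S i)) - snd (f i)) <= 1.
Definition Hendp (f : nat -> Z*Z) lo m l h :=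
  (snd (f lo) = h /\ snd (f (lo+m)%nat) = l) \/ (snd (f lo) = l /\ snd (f (lo+m)%nat) = h).

Lemma cross_left f D lo m l h y x : Hendp f lo m l h -> l < y <= h ->
  (forall i, (lo <= i < lo+m)%nat -> x < fst (f i) + D) ->
  Nat.odd (cross f D lo m y x) = true.
Proof.
  intros He Hy Hx. unfold cross.
  rewrite (cnt_ext _ (fun i => xorb ((fun i => y <=? snd (f i)) i) ((fun i => y <=? snd (f i)) (S i)))).
  - rewrite cnt_parity. cbn beta.
    destruct He as [[-> ->]|[-> ->]]; bdestr; reflexivity.
  - intros i Hi. unfold cr. rewrite (proj2 (Z.ltb_lt _ _)) by (apply Hx; lia).
    rewrite andb_true_r. reflexivity.
Qed.

Lemma cross_right f D lo m y x :
  (forall i, (lo <= i < lo+m)%nat -> fst (f i) + D <= x) ->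
  cross f D lo m y x = O.
Proof.
  intros Hx. unfold cross. apply cnt_false. intros i Hi. unfold cr.
  rewrite (proj2 (Z.ltb_ge _ _)) by (apply Hx; lia). apply andb_false_r.
Qed.

Lemma cross_step f D lo m l h x y : lazyw f lo m -> Hendp f lo m l h -> l < y < h ->
  offt f D lo m (x,y) ->
  Nat.odd (cross f D lo m y x) = Nat.odd (cross f D lo m (y+1) x).
Proof.
  intros Hl He Hy Ho.
  set (c := fun i => (snd (f i) =? y) && (x <? fst (f i) + D)).
  assert (E : cnt (fun i => xorb (c i) (c (S i))) lo m =
              (cross f D lo m y x + cross f D lo m (y+1) x)%nat).
  { unfold cross. apply cnt_or. intros i Hi.
    specialize (Hl i Hi). pose proof (Ho i ltac:(lia)) as H1.
    pose proof (Ho (S i) ltac:(lia)) as H2. simpl in H1, H2.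
    unfold c, cr. bdestr; split; reflexivity. }
  pose proof (cnt_parity c lo m) as P. rewrite E in P.
  assert (c lo = false /\ c (lo+m)%nat = false) as [C1 C2].
  { unfold c. destruct He as [[-> ->]|[-> ->]]; bdestr; split; reflexivity. }
  rewrite C1, C2 in P. rewrite Nat.odd_add in P.
  destruct (Nat.odd (cross f D lo m y x)), (Nat.odd (cross f D lo m (y+1) x));
    simpl in P; congruence.
Qed.

Lemma cross_shift f D lo m L x y : lazyw f lo m -> (L = y \/ L = y+1) ->
  offt f D lo m (x+1,y) -> cross f D lo m L x = cross f D lo m L (x+1).
Proof.
  intros Hl HL Ho. unfold cross. apply cnt_ext. intros i Hi.
  specialize (Hl i Hi). pose proof (Ho i ltac:(lia)) as H1.
  pose proof (Ho (S i) ltac:(lia)) as H2. simpl in H1, H2.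
  unfold cr. bdestr; reflexivity.
Qed.
Lemma side_adj f D lo m l h (z z' : Z*Z) : lazyw f lo m -> Hendp f lo m l h -> l < h ->
  l <= snd z <= h -> l <= snd z' <= h ->
  Z.abs (fst z' - fst z) + Z.abs (snd z' - snd z) <= 1 ->
  offt f D lo m z -> offt f D lo m z' -> side f D lo m l z = side f D lo m l z'.
Proof.
  intros Hl He Hlh Hz Hz' Hs Ho Ho'.
  destruct z as [x y], z' as [x' y']. unfold side; simpl in *.
  assert ((x'=x /\ y'=y) \/ (y'=y /\ x'=x+1) \/ (y'=y /\ x=x'+1) \/
          (x'=x /\ y'=y+1) \/ (x'=x /\ y=y'+1)) as C by lia.
  destruct C as [[-> ->]|[[-> ->]|[[-> ->]|[[-> ->]|[-> ->]]]]].
  - reflexivity.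
  - f_equal. apply cross_shift with (y:=y); auto.
    unfold Lv; destruct (Z.ltb_spec l y); lia.
  - f_equal. symmetry. apply cross_shift with (y:=y); auto.
    unfold Lv; destruct (Z.ltb_spec l y); lia.
  - unfold Lv. destruct (Z.ltb_spec l y), (Z.ltb_spec l (y+1)); try lia.
    + apply cross_step with (l:=l) (h:=h); auto; lia.
    + replace (l+1) with (y+1) by lia. reflexivity.
  - unfold Lv. destruct (Z.ltb_spec l y'), (Z.ltb_spec l (y'+1)); try lia.
    + symmetry. apply cross_step with (l:=l) (h:=h); auto; lia.
    + replace (l+1) with (y'+1) by lia. reflexivity.
Qed.

Lemma side_walk f D lo m l h (g : nat -> Z*Z) M : lazyw f lo m -> Hendp f lo m l h -> l < h ->
  lazyw g 0 M ->
  (forall i, (i <= M)%nat -> l <= snd (g i) <= h /\ offt f D lo m (g i)) ->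
  forall i, (i <= M)%nat -> side f D lo m l (g i) = side f D lo m l (g O).
Proof.
  intros Hl He Hlh Hg Hp. induction i; intros Hi; auto.
  rewrite <- IHi by lia.
  destruct (Hp i ltac:(lia)), (Hp (S i) ltac:(lia)).
  symmetry; apply side_adj with (h:=h); auto. apply Hg; lia.
Qed.

Lemma argmax (u : nat -> Z) (N : nat) :
  exists a, (a <= N)%nat /\ forall i, (i <= N)%nat -> u i <= u a.
Proof.
  induction N.
  - exists O. split; [lia|]. intros i Hi. assert (i = O) by lia. subst; lia.
  - destruct IHN as [a [Ha H]]. destruct (Z.le_gt_cases (u (S N)) (u a)).
    + exists a. split; [lia|]. intros i Hi.
      destruct (Nat.eq_dec i (S N)); [subst; lia| apply H; lia].
    + exists (S N). split; [lia|]. intros i Hi.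
      destruct (Nat.eq_dec i (S N)); [subst; lia| specialize (H i ltac:(lia)); lia].
Qed.

Lemma argmin (u : nat -> Z) (N : nat) :
  exists a, (a <= N)%nat /\ forall i, (i <= N)%nat -> u a <= u i.
Proof.
  destruct (argmax (fun i => - u i) N) as [a [Ha H]]. exists a. split; auto.
  intros i Hi. specialize (H i Hi). lia.
Qed.

Lemma ivt_up (u : nat -> Z) v : forall p q, (q <= p)%nat ->
  (forall i, (q <= i < p)%nat -> Z.abs (u (S i) - u i) <= 1) ->
  u q <= v <= u p -> exists m0, (q <= m0 <= p)%nat /\ u m0 = v.
Proof.
  induction p; intros q Hqp Hs Hv.
  - assert (q = O) by lia. subst. exists O. split; [lia|lia].
  - destruct (Z.eq_dec v (u (S p))) as [E|E].
    + exists (S p). split; [lia|auto].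
    + destruct (Nat.eq_dec q (S p)) as [->|Hq]; [lia|].
      destruct (IHp q) as [m0 [Hm Hm']]; try lia.
      * intros; apply Hs; lia.
      * specialize (Hs p ltac:(lia)). lia.
      * exists m0; split; [lia|auto].
Qed.

Lemma ivt_any (u : nat -> Z) N v p q : (p <= N)%nat -> (q <= N)%nat ->
  (forall i, (i < N)%nat -> Z.abs (u (S i) - u i) <= 1) ->
  u q <= v <= u p -> exists m0, (m0 <= N)%nat /\ u m0 = v.
Proof.
  intros Hp Hq Hs Hv. destruct (le_lt_dec q p).
  - destruct (ivt_up u v p q) as [m0 [? ?]]; auto.
    + intros; apply Hs; lia.
    + exists m0; split; [lia|auto].
  - destruct (ivt_up (fun i => - u i) (- v) q p) as [m0 [? ?]]; try lia.
    + intros i Hi. specialize (Hs i ltac:(lia)). lia.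
    + exists m0; split; [lia|lia].
Qed.

Lemma chord_mult f N D : 1 <= D -> lazyw f 0 N ->
  (forall p q, (p <= N)%nat -> (q <= N)%nat ->
     ~ (fst (f p) = fst (f q) + D /\ snd (f p) = snd (f q))) ->
  forall j : nat, forall p q, (p <= N)%nat -> (q <= N)%nat ->
     ~ (fst (f p) = fst (f q) + Z.of_nat (S j) * D /\ snd (f p) = snd (f q)).
Proof.
  intros HD Hlz H1. induction j.
  - intros p q Hp Hq. replace (Z.of_nat 1 * D) with D by lia. apply H1; auto.
  - intros p q Hp Hq [Hx Hy].
    set (JD := Z.of_nat (S j) * D) in *.
    assert (EJ : Z.of_nat (S (S j)) * D = JD + D) by (unfold JD; rewrite (Nat2Z.inj_succ (S j)); ring).
    assert (JD0 : D <= JD) by (unfold JD; nia).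
    rewrite EJ in Hx.
    destruct (argmax (fun i => snd (f i)) N) as [a [Ha Hmax]].
    destruct (argmin (fun i => snd (f i)) N) as [b [Hb Hmin]].
    destruct (argmin (fun i => fst (f i)) N) as [e [He Hxmin]].
    destruct (argmax (fun i => fst (f i)) N) as [g0 [Hg Hxmax]].
    cbn beta in *.
    set (h := snd (f a)) in *. set (l := snd (f b)) in *.
    assert (Hlh0 : l <= h) by (apply Z.le_trans with (snd (f a)); [apply Hmin; auto| lia]).
    destruct (Z.eq_dec h l) as [Ehl|Ehl].
    + destruct (ivt_any (fun i => fst (f i)) N (fst (f q) + D) p q) as [m0 [Hm0 Hm0']]; auto.
      * intros i Hi. specialize (Hlz i ltac:(lia)). lia.
      * cbn beta. lia.
      * apply (H1 m0 q); auto. split; auto.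
        pose proof (Hmax m0 Hm0). pose proof (Hmin m0 Hm0).
        pose proof (Hmax q Hq). pose proof (Hmin q Hq). lia.
    + assert (Hlh : l < h) by lia.
      set (lo := Nat.min a b). set (m := (Nat.max a b - Nat.min a b)%nat).
      assert (Hlm : (lo + m <= N)%nat) by (unfold lo, m; lia).
      assert (Hlzs : lazyw f lo m) by (intros i Hi; apply Hlz; lia).
      assert (HE : Hendp f lo m l h).
      { unfold Hendp, lo, m. destruct (le_lt_dec a b).
        - rewrite Nat.min_l, Nat.max_r by lia. replace (a + (b - a))%nat with b by lia.
          left; auto.
        - rewrite Nat.min_r, Nat.max_l by lia. replace (b + (a - b))%nat with a by lia.
          right; auto. }
      assert (S1 : forall i, (i <= N)%nat -> side f D lo m l (f i) = side f D lo m l (f O)).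
      { apply side_walk with (h:=h) (M:=N); auto.
        intros i Hi. split.
        - split; [apply Hmin|apply Hmax]; auto.
        - intros i' Hi'. apply (H1 i i'); auto; lia. }
      set (g' := fun i => (fst (f i) + (JD + D), snd (f i))).
      assert (S2 : forall i, (i <= N)%nat -> side f D lo m l (g' i) = side f D lo m l (g' O)).
      { apply side_walk with (h:=h) (M:=N); auto.
        - intros i Hi. unfold g'; simpl. specialize (Hlz i Hi).
          replace (fst (f (S i)) + (JD + D) - (fst (f i) + (JD + D))) with
             (fst (f (S i)) - fst (f i)) by ring. exact Hlz.
        - intros i Hi. unfold g'; simpl. split.
          + split; [apply Hmin|apply Hmax]; auto.
          + intros i' Hi' [Ex Ey]. simpl in Ex, Ey.
            apply (IHj i' i); [lia|auto|]. split; lia. }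
      assert (T1 : side f D lo m l (f e) = true).
      { unfold side. apply cross_left with (l:=l) (h:=h); auto.
        - pose proof (Hmin e He); pose proof (Hmax e He).
          unfold Lv; destruct (Z.ltb_spec l (snd (f e))); lia.
        - intros i Hi. pose proof (Hxmin i ltac:(lia)). lia. }
      assert (T2 : side f D lo m l (g' g0) = false).
      { unfold side. rewrite cross_right; auto.
        intros i Hi. unfold g'; simpl. pose proof (Hxmax i ltac:(lia)). lia. }
      assert (E : f p = g' q).
      { unfold g'. rewrite (surjective_pairing (f p)). f_equal; lia. }
      rewrite S1 in T1 by auto. rewrite S2 in T2 by auto.
      rewrite <- (S1 p Hp), E, (S2 q Hq) in T1. congruence.
Qed.
Definition stretch (f : nat -> Z*Z) (k : nat) (j : nat) : Z*Z :=
  let i := (j / k)%nat in let t := Z.of_nat (j mod k) in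
  let x := fst (f i) in let y := snd (f i) in
  let x' := fst (f (S i)) in let y' := snd (f (S i)) in
  if (t =? 0) then (Z.of_nat k * x, y)
  else if (y =? y') then (Z.of_nat k * x + t * (x' - x), y)
  else (Z.of_nat k * x, y').

Lemma divmod_eq k i t : (t < k)%nat -> ((k*i + t)/k = i /\ (k*i+t) mod k = t)%nat.
Proof.
  intros H. split.
  - symmetry. apply Nat.div_unique with t; lia.
  - symmetry. apply Nat.mod_unique with i; lia.
Qed.

Lemma stretch_eq f k i t : (t < k)%nat ->
  stretch f k (k*i + t) =
  (if (Z.of_nat t =? 0) then (Z.of_nat k * fst (f i), snd (f i))
   else if (snd (f i) =? snd (f (S i))) then
     (Z.of_nat k * fst (f i) + Z.of_nat t * (fst (f (S i)) - fst (f i)), snd (f i))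
   else (Z.of_nat k * fst (f i), snd (f (S i)))).
Proof.
  intros H. unfold stretch. destruct (divmod_eq k i t H) as [-> ->]. reflexivity.
Qed.

Lemma stretch_k f k i : (1 <= k)%nat ->
  stretch f k (k*i) = (Z.of_nat k * fst (f i), snd (f i)).
Proof.
  intros H. replace (k*i)%nat with (k*i+0)%nat by lia. rewrite stretch_eq by lia.
  reflexivity.
Qed.

Lemma decomp k j : (1 <= k)%nat -> exists i t, (t < k)%nat /\ j = (k*i+t)%nat.
Proof.
  intros H. exists (j / k)%nat, (j mod k)%nat. split.
  - apply Nat.mod_upper_bound; lia.
  - apply Nat.div_mod; lia.
Qed.

Lemma stretch_lazy f N k : (1 <= k)%nat -> lazyw f 0 N -> lazyw (stretch f k) 0 (k*N).
Proof.
  intros Hk Hl j Hj. destruct (decomp k j Hk) as [i [t [Ht ->]]].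
  assert (Hi : (i < N)%nat) by nia.
  specialize (Hl i ltac:(lia)).
  set (K := Z.of_nat k) in *.
  assert (HK : 1 <= K) by (unfold K; lia).
  destruct (le_lt_dec k (S t)) as [Hb|Hb].
  -
    assert (t = k - 1)%nat by lia.
    replace (S (k*i + t)) with (k * S i + 0)%nat by nia.
    rewrite !stretch_eq by lia. fold K.
    destruct (Nat.eq_dec t 0) as [T0|T0].
    + rewrite T0. assert (K1 : K = 1) by (unfold K; lia).
      change (Z.of_nat 0) with 0. rewrite Z.eqb_refl. cbn [fst snd].
      rewrite K1, !Z.mul_1_l. exact Hl.
    + assert (Ht' : Z.of_nat t = K - 1) by (unfold K; lia).
      rewrite Ht'. change (Z.of_nat 0) with 0. rewrite Z.eqb_refl.
      destruct (Z.eqb_spec (K-1) 0); [lia|].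
      destruct (Z.eqb_spec (snd (f i)) (snd (f (S i)))) as [Ey|Ey]; cbn [fst snd].
      * replace (K * fst (f (S i)) - (K * fst (f i) + (K - 1) * (fst (f (S i)) - fst (f i))))
          with (fst (f (S i)) - fst (f i)) by ring. lia.
      * assert (fst (f (S i)) = fst (f i)) as Ex by lia. rewrite Ex.
        replace (K * fst (f i) - K * fst (f i)) with 0 by ring.
        replace (snd (f (S i)) - snd (f (S i))) with 0 by ring. simpl; lia.
  - replace (S (k*i + t)) with (k * i + S t)%nat by lia.
    rewrite !stretch_eq by lia. fold K.
    destruct (Z.eqb_spec (Z.of_nat (S t)) 0); [lia|].
    destruct (Z.eqb_spec (snd (f i)) (snd (f (S i)))) as [Ey|Ey];
    destruct (Z.eqb_spec (Z.of_nat t) 0) as [E0|E0]; cbn [fst snd]; rewrite ?Nat2Z.inj_succ.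
    + rewrite E0.
      replace (K * fst (f i) + Z.succ 0 * (fst (f (S i)) - fst (f i)) - (K * fst (f i) + 0 * (fst (f (S i)) - fst (f i))))
        with (fst (f (S i)) - fst (f i)) by ring.
      rewrite Ey. replace (snd (f (S i)) - snd (f (S i))) with 0 by ring. lia.
    + replace (K * fst (f i) + Z.succ (Z.of_nat t) * (fst (f (S i)) - fst (f i)) -
               (K * fst (f i) + Z.of_nat t * (fst (f (S i)) - fst (f i))))
        with (fst (f (S i)) - fst (f i)) by ring.
      rewrite Ey. replace (snd (f (S i)) - snd (f (S i))) with 0 by ring. lia.
    + replace (K * fst (f i) - K * fst (f i)) with 0 by ring. lia.
    + replace (K * fst (f i) - K * fst (f i)) with 0 by ring.
      replace (snd (f (S i)) - snd (f (S i))) with 0 by ring. simpl; lia.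
Qed.

Definition ptin (f : nat -> Z*Z) N (x y : Z) := exists i, (i <= N)%nat /\ fst (f i) = x /\ snd (f i) = y.

Lemma stretch_pt f N k j : (1 <= k)%nat -> lazyw f 0 N -> (j <= k*N)%nat ->
  exists x e, fst (stretch f k j) = Z.of_nat k * x + e /\ 0 <= e <= Z.of_nat k /\
    ptin f N x (snd (stretch f k j)) /\ (0 < e -> ptin f N (x+1) (snd (stretch f k j))).
Proof.
  intros Hk Hl Hj. destruct (decomp k j Hk) as [i [t [Ht ->]]].
  rewrite stretch_eq by lia.
  set (K := Z.of_nat k) in *.
  destruct (Z.eqb_spec (Z.of_nat t) 0) as [T0|T0]; simpl.
  - assert (i <= N)%nat by nia.
    exists (fst (f i)), 0. split; [ring|]. split; [lia|]. split; [|lia].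
    exists i; auto.
  - assert (Hi : (i < N)%nat) by nia. specialize (Hl i ltac:(lia)).
    destruct (Z.eqb_spec (snd (f i)) (snd (f (S i)))) as [Ey|Ey]; simpl.
    + assert (fst (f (S i)) - fst (f i) = 0 \/ fst (f (S i)) - fst (f i) = 1 \/
              fst (f (S i)) - fst (f i) = -1) as [E|[E|E]] by lia; rewrite E.
      * exists (fst (f i)), 0. split; [ring|]. split; [lia|]. split; [|lia].
        exists i; split; [lia|auto].
      * exists (fst (f i)), (Z.of_nat t). split; [ring|]. split; [lia|]. split.
        -- exists i; split; [lia|auto].
        -- intros _. exists (S i). split; [lia|]. split; lia.
      * exists (fst (f i) - 1), (K - Z.of_nat t). split; [ring|]. split; [lia|]. split.
        -- exists (S i). split; [lia|]. split; lia.
        -- intros _. exists i. split; [lia|]. split; [ring|auto].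
    + assert (Ex : fst (f (S i)) = fst (f i)) by lia.
      exists (fst (f i)), 0. split; [ring|]. split; [lia|]. split; [|lia].
      exists (S i). split; [lia|]. split; auto.
Qed.

Lemma stretch_avoid f N (kz : nat) (d n r : Z) : (1 <= kz)%nat -> lazyw f 0 N ->
  n = Z.of_nat kz * d + r -> Z.abs r < Z.of_nat kz ->
  (forall p q, (p <= N)%nat -> (q <= N)%nat -> ~ (fst (f p) = fst (f q) + d /\ snd (f p) = snd (f q))) ->
  forall p q, (p <= kz*N)%nat -> (q <= kz*N)%nat ->
    ~ (fst (stretch f kz p) = fst (stretch f kz q) + n /\ snd (stretch f kz p) = snd (stretch f kz q)).
Proof.
  intros Hk Hl Hn Hr Hav p q Hp Hq [Hx Hy].
  destruct (stretch_pt f N kz p Hk Hl Hp) as [x2 [e2 [X2 [E2 [P2 Q2]]]]].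
  destruct (stretch_pt f N kz q Hk Hl Hq) as [x1 [e1 [X1 [E1 [P1 Q1]]]]].
  set (K := Z.of_nat kz) in *. rewrite Hy in P2, Q2.
  set (Y := snd (stretch f kz q)) in *.
  assert (EQ : K * (x2 - x1 - d) = r + e1 - e2) by nia.
  assert (x2 - x1 - d = 0 \/ x2 - x1 - d = 1 \/ x2 - x1 - d = -1) as [C|[C|C]].
  { destruct (Z.le_gt_cases 2 (x2 - x1 - d)); [nia|].
    destruct (Z.le_gt_cases (x2 - x1 - d) (-2)); [nia|lia]. }
  - destruct P2 as [i2 [? [? ?]]], P1 as [i1 [? [? ?]]].
    apply (Hav i2 i1); auto. split; lia.
  - assert (0 < e1) by nia. destruct (Q1 H) as [i1 [? [? ?]]].
    destruct P2 as [i2 [? [? ?]]]. apply (Hav i2 i1); auto. split; lia.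
  - assert (0 < e2) by nia. destruct (Q2 H) as [i2 [? [? ?]]].
    destruct P1 as [i1 [? [? ?]]]. apply (Hav i2 i1); auto. split; lia.
Qed.
Fixpoint chain (l : list gauss) : Prop :=
  match l with
  | a :: ((b :: _) as t) => gnorm2 (gsub b a) = 1 /\ chain t
  | _ => True
  end.

Lemma chain_walk l : l <> [] -> chain l -> is_walk l.
Proof.
  intros Hne Hc. split; auto. clear Hne.
  induction l as [|a t IH]; intros j Hj; simpl in Hj; [lia|].
  destruct t as [|b t']; simpl in Hj; [lia|].
  destruct Hc as [H1 H2]. destruct j as [|j].
  - simpl. exact H1.
  - change (nth (S (S j)) (a :: b :: t') (0,0)) with (nth (S j) (b :: t') (0,0)).
    change (nth (S j) (a :: b :: t') (0,0)) with (nth j (b :: t') (0,0)).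
    apply IH; auto. simpl; lia.
Qed.

Lemma chain_app l1 l2 : l1 <> [] -> l2 <> [] -> chain l1 -> chain l2 ->
  gnorm2 (gsub (hd (0,0) l2) (last l1 (0,0))) = 1 -> chain (l1 ++ l2).
Proof.
  induction l1 as [|a t IH]; intros H1 H2 C1 C2 E; [congruence|].
  destruct t as [|c t'].
  - destruct l2 as [|b l2']; [congruence|]. simpl in *. split; auto.
  - simpl. simpl in C1. destruct C1 as [C1a C1b]. split; auto.
    apply (IH ltac:(discriminate) H2 C1b C2). exact E.
Qed.

Lemma chain_map_seq (F : nat -> gauss) s M :
  (forall i, (s <= i < s + M)%nat -> gnorm2 (gsub (F (S i)) (F i)) = 1) ->
  chain (map F (seq s (S M))).
Proof.
  revert s. induction M; intros s H; simpl; auto.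
  split.
  - apply H; lia.
  - apply (IHM (S s)). intros; apply H; lia.
Qed.

Lemma last_map_seq (F : nat -> gauss) s M : last (map F (seq s (S M))) (0,0) = F (s + M)%nat.
Proof.
  revert s. induction M; intros s.
  - simpl. f_equal; lia.
  - change (map F (seq s (S (S M)))) with (F s :: map F (seq (S s) (S M))).
    replace (s + S M)%nat with (S s + M)%nat by lia.
    rewrite <- (IHM (S s)). reflexivity.
Qed.

Definition vseg (x a b : Z) : list gauss :=
  map (fun i => (x, a + Z.sgn (b - a) * Z.of_nat i)) (seq 0 (S (Z.to_nat (Z.abs (b - a))))).

Lemma vseg_chain x a b : chain (vseg x a b).
Proof.
  apply chain_map_seq. intros i Hi. unfold gsub, gnorm2; cbn [fst snd].
  assert (b - a <> 0) by lia.
  destruct (Z.lt_trichotomy (b-a) 0) as [L|[L|L]]; [|lia|].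
  - rewrite (Z.sgn_neg _ L). rewrite Nat2Z.inj_succ. ring_simplify. reflexivity.
  - rewrite (Z.sgn_pos _ L). rewrite Nat2Z.inj_succ. ring_simplify. reflexivity.
Qed.

Lemma vseg_hd x a b : hd (0,0) (vseg x a b) = (x, a).
Proof. unfold vseg. simpl. f_equal. ring. Qed.

Lemma vseg_last x a b : last (vseg x a b) (0,0) = (x, b).
Proof.
  unfold vseg. rewrite last_map_seq. simpl. f_equal.
  rewrite Z2Nat.id by lia.
  destruct (Z.lt_trichotomy (b-a) 0) as [L|[L|L]].
  - rewrite (Z.sgn_neg _ L), Z.abs_neq by lia. ring.
  - rewrite L. simpl. lia.
  - rewrite (Z.sgn_pos _ L), Z.abs_eq by lia. ring.
Qed.

Lemma vseg_nn x a b : vseg x a b <> [].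
Proof. unfold vseg. simpl. discriminate. Qed.

Lemma vseg_in x a b p : In p (vseg x a b) ->
  fst p = x /\ Z.min a b <= snd p <= Z.max a b.
Proof.
  unfold vseg. rewrite in_map_iff. intros [i [<- Hi]]. rewrite in_seq in Hi.
  simpl. split; auto.
  assert (Z.of_nat i <= Z.abs (b - a)) by lia.
  destruct (Z.lt_trichotomy (b-a) 0) as [L|[L|L]].
  - rewrite (Z.sgn_neg _ L). lia.
  - rewrite L. simpl. lia.
  - rewrite (Z.sgn_pos _ L). lia.
Qed.

Fixpoint cols (G : Z -> Z) (m : nat) (x : Z) : list gauss :=
  match m with
  | O => vseg x (G x) (G (x+1))
  | S m' => vseg x (G x) (G (x+1)) ++ cols G m' (x+1)
  end.

Lemma cols_nn G m x : cols G m x <> [].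
Proof.
  destruct m; simpl.
  - apply vseg_nn.
  - discriminate.
Qed.

Lemma cols_hd G m x : hd (0,0) (cols G m x) = (x, G x).
Proof.
  destruct m; simpl.
  - apply vseg_hd.
  - unfold vseg. simpl. f_equal. ring.
Qed.

Lemma last_app' (l1 l2 : list gauss) : l2 <> [] -> last (l1 ++ l2) (0,0) = last l2 (0,0).
Proof.
  intros H. induction l1 as [|a t IH]; auto.
  simpl. rewrite IH. destruct (t ++ l2) eqn:E; auto.
  apply app_eq_nil in E. tauto.
Qed.

Lemma cols_last G m x : last (cols G m x) (0,0) = (x + Z.of_nat m, G (x + Z.of_nat m + 1)).
Proof.
  revert x. induction m; intros x; cbn [cols].
  - rewrite vseg_last. f_equal; [lia| f_equal; lia].
  - rewrite last_app' by apply cols_nn. rewrite IHm. f_equal; [lia| f_equal; lia].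
Qed.

Lemma cols_chain G m x : chain (cols G m x).
Proof.
  revert x. induction m; intros x; cbn [cols].
  - apply vseg_chain.
  - apply chain_app; auto using vseg_nn, cols_nn, vseg_chain.
    rewrite cols_hd, vseg_last. unfold gsub, gnorm2; simpl. ring.
Qed.

Lemma cols_in G m x p : In p (cols G m x) ->
  exists c, x <= c <= x + Z.of_nat m /\ fst p = c /\
    Z.min (G c) (G (c+1)) <= snd p <= Z.max (G c) (G (c+1)).
Proof.
  revert x. induction m; intros x H; cbn [cols] in H.
  - apply vseg_in in H. exists x. split; [lia|]. tauto.
  - apply in_app_or in H. destruct H as [H|H].
    + apply vseg_in in H. exists x. split; [lia|]. tauto.
    + destruct (IHm (x+1) H) as [c [Hc R]]. exists c. split; [lia|]. exact R.
Qed.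

Lemma last_nth (l : list gauss) : l <> [] -> last l (0,0) = nth (length l - 1) l (0,0).
Proof.
  induction l as [|a t IH]; intros H; [congruence|].
  destruct t as [|b t']; [reflexivity|].
  change (last (a :: b :: t') (0,0)) with (last (b :: t') (0,0)).
  rewrite IH by discriminate. simpl. rewrite Nat.sub_0_r. reflexivity.
Qed.

Lemma staircase_avoid (G : Z -> Z) (n d : Z) : 1 <= n -> 1 <= d -> G 0 = 0 -> G (n+1) = 0 ->
  (forall a, 0 <= a -> a + d <= n ->
     G (a+d) < G a /\ G (a+d+1) < G a /\ G (a+d) < G (a+1) /\ G (a+d+1) < G (a+1)) ->
  avoidable n d.
Proof.
  intros Hn Hd G0 Gn Hpot.
  set (w := cols G (Z.to_nat n) 0).
  exists w. split; [|split].
  - apply chain_walk; [apply cols_nn|apply cols_chain].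
  - exists (length w - 1)%nat, O.
    assert (Hl : (0 < length w)%nat) by (destruct w eqn:E; [exfalso; apply (cols_nn _ _ _ E)|simpl; lia]).
    split; [lia|]. split; [lia|].
    rewrite <- last_nth by apply cols_nn.
    assert (nth 0 w (0,0) = hd (0,0) w) as -> by (destruct w; reflexivity).
    unfold w. rewrite cols_hd, cols_last, Z2Nat.id by lia.
    replace (0 + n + 1) with (n+1) by ring. rewrite G0, Gn.
    unfold gsub, gofZ; simpl. f_equal; ring.
  - intros t u Ht Hu E.
    assert (It : In (nth t w (0,0)) w) by (apply nth_In; auto).
    assert (Iu : In (nth u w (0,0)) w) by (apply nth_In; auto).
    apply cols_in in It. apply cols_in in Iu.
    destruct It as [c1 [Hc1 [F1 S1]]], Iu as [c2 [Hc2 [F2 S2]]].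
    rewrite Z2Nat.id in Hc1, Hc2 by lia.
    unfold gsub, gofZ in E. injection E as Ex Ey.
    destruct (Hpot c2 ltac:(lia) ltac:(lia)) as [I1 [I2 [I3 I4]]].
    replace c1 with (c2 + d) in S1 by lia.
    replace (c2 + d + 1) with (c2 + d + 1) in S1 by ring.
    lia.
Qed.
Definition cU (d x : Z) := (x + d) / (d + 1).
Definition inU (d x : Z) : bool := cU d x * (d-1) + 1 <=? x.
Definition gpot (n d i : Z) : Z :=
  if (i =? 0) || (i =? n+1) then 0
  else if inU d i then - (i / (d-1)) else (n + 1 - i) / (d-1).

Lemma div_eq a b q : 0 < b -> q*b <= a < (q+1)*b -> a / b = q.
Proof.
  intros Hb [H1 H2].
  assert (q <= a / b) by (apply Z.div_le_lower_bound; lia).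
  assert (a / b < q + 1) by (apply Z.div_lt_upper_bound; lia). lia.
Qed.

Lemma gpot_int n d i : i <> 0 -> i <> n+1 ->
  gpot n d i = if inU d i then - (i / (d-1)) else (n + 1 - i) / (d-1).
Proof.
  intros H1 H2. unfold gpot.
  rewrite (proj2 (Z.eqb_neq _ _) H1), (proj2 (Z.eqb_neq _ _) H2). reflexivity.
Qed.

Lemma U_closed d a b : 3 <= d -> 1 <= a -> inU d a = true -> d-1 <= b - a <= d+1 ->
  inU d b = true.
Proof.
  unfold inU, cU. rewrite !Z.leb_le. intros Hd Ha Hu Hb.
  assert (C : (b + d) / (d+1) <= (a + d) / (d+1) + 1).
  { rewrite <- (Z.div_add (a + d) 1 (d+1)) by lia.
    apply Z.div_le_mono; lia. }
  assert (0 <= (b + d) / (d+1)) by (apply Z.div_pos; lia).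
  nia.
Qed.

Lemma U_first d b : 3 <= d -> (b = d \/ b = d+1) -> inU d b = true.
Proof.
  intros Hd Hb. unfold inU, cU. rewrite Z.leb_le.
  rewrite (div_eq (b + d) (d+1) 1) by lia. lia.
Qed.

Lemma q_div_ge1 x q : 0 < q -> q <= x -> 1 <= x / q.
Proof. intros. apply Z.div_le_lower_bound; lia. Qed.

Lemma q_div_step x y q : 0 < q -> 0 <= y -> y + q <= x -> y / q + 1 <= x / q.
Proof.
  intros Hq Hy Hxy. rewrite <- (Z.div_add y 1 q) by lia. apply Z.div_le_mono; lia.
Qed.

Lemma pot_edge n d a b : 3 <= d -> d + 1 <= n ->
  (forall a', 1 <= a' -> (a' = n - d \/ a' = n + 1 - d) -> inU d a' = false) ->
  0 <= a -> b <= n + 1 -> d - 1 <= b - a <= d + 1 ->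
  (a = 0 -> d <= b - a) -> (b = n + 1 -> d <= b - a) ->
  gpot n d b < gpot n d a.
Proof.
  intros Hd Hn HL Ha Hb Hba H0 H1.
  assert (Hq : 0 < d - 1) by lia.
  destruct (Z.eq_dec a 0) as [->|Ha0].
  - specialize (H0 eq_refl).
    unfold gpot at 2. simpl.
    rewrite gpot_int by lia. rewrite U_first by lia.
    pose proof (q_div_ge1 b (d-1) Hq ltac:(lia)). lia.
  - destruct (Z.eq_dec b (n+1)) as [->|Hbn].
    + specialize (H1 eq_refl).
      unfold gpot at 1. rewrite Z.eqb_refl, orb_true_r.
      rewrite gpot_int by lia. rewrite HL by lia.
      pose proof (q_div_ge1 (n + 1 - a) (d-1) Hq ltac:(lia)). lia.
    + rewrite (gpot_int n d a), (gpot_int n d b) by lia.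
      destruct (inU d a) eqn:Ua.
      * rewrite (U_closed d a b) by (auto; lia).
        pose proof (q_div_step b a (d-1) Hq ltac:(lia) ltac:(lia)). lia.
      * assert (0 <= (n + 1 - a) / (d-1)) by (apply Z.div_pos; lia).
        destruct (inU d b).
        -- pose proof (q_div_ge1 b (d-1) Hq ltac:(lia)). lia.
        -- pose proof (q_div_step (n + 1 - a) (n + 1 - b) (d-1) Hq ltac:(lia) ltac:(lia)). lia.
Qed.

Lemma pot_ok (n d k r : Z) : 1 <= n -> 1 <= d -> n = k * d + r ->
  - (d / 2) <= r -> r <= (d + 1) / 2 - 1 -> k <= Z.abs r ->
  forall a, 0 <= a -> a + d <= n ->
  gpot n d (a+d) < gpot n d a /\ gpot n d (a+d+1) < gpot n d a /\
  gpot n d (a+d) < gpot n d (a+1) /\ gpot n d (a+d+1) < gpot n d (a+1).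
Proof.
  intros Hn Hd Hnkr Hlo Hhi Hk a Ha Had.
  assert (E1 : 2 * (d / 2) <= d) by (apply Z.mul_div_le; lia).
  assert (E2 : 2 * ((d+1) / 2) <= d + 1) by (apply Z.mul_div_le; lia).
  assert (R1 : - d <= 2 * r <= d - 1) by lia.
  assert (K1 : 1 <= k).
  { destruct (Z.le_gt_cases k 0); [|lia]. assert (k * d <= 0) by nia. lia. }
  assert (Rn : r <> 0) by lia.
  assert (D3 : 3 <= d).
  { destruct (Z.eq_dec d 1) as [->|]; [lia|]. destruct (Z.eq_dec d 2) as [->|]; [|lia].
    assert (r = -1) by lia. assert (k = 1) by lia. subst. lia. }
  assert (N1 : d + 1 <= n).
  { destruct (Z.eq_dec k 1) as [->|]; [lia|]. assert (2 * d <= k * d) by nia. lia. }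
  assert (HL : forall a', 1 <= a' -> (a' = n - d \/ a' = n + 1 - d) -> inU d a' = false).
  { intros a' Ha1 Ha'. unfold inU, cU. apply Z.leb_gt.
    assert (exists e, 0 <= e <= 1 /\ a' = n - d + e) as [e [He ->]] by
      (destruct Ha'; [exists 0|exists 1]; lia).
    destruct (Z.lt_trichotomy r 0) as [Rneg|[R0|Rpos]]; [|lia|].
    - rewrite (div_eq (n - d + e + d) (d+1) (k-1)); [nia|lia|nia].
    - rewrite (div_eq (n - d + e + d) (d+1) k); [nia|lia|nia]. }
  repeat split; apply pot_edge; auto; lia.
Qed.

Theorem mainTheorem1 (n d k r : Z) (hn : 1 <= n) (hd : 1 <= d)
  (hnkr : n = k * d + r)
  (hrlo : - (d / 2) <= r) (hrhi : r <= (d + 1) / 2 - 1) :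
  A n d <-> Z.abs r + 1 <= k.
Proof.
  split.
  - intros [_ Hna]. destruct (Z.le_gt_cases (Z.abs r + 1) k) as [H|H]; auto.
    exfalso. apply Hna. apply staircase_avoid with (G := gpot n d); auto.
    + unfold gpot. rewrite Z.eqb_refl, orb_true_r. reflexivity.
    + apply (pot_ok n d k r); auto. lia.
  - intros Hk. split; [lia|].
    intros [w [Hw [[r0 [s0 [Hr0 [Hs0 Hrs]]]] Hav]]].
    set (f := fun i => nth i w (0,0)).
    set (N := (length w - 1)%nat).
    assert (Hlz : lazyw f 0 N).
    { intros i Hi. destruct Hw as [_ Hw]. specialize (Hw i ltac:(unfold N in Hi; lia)).
      unfold gnorm2, gsub in Hw. cbn [fst snd] in Hw. apply unit_abs. unfold f. lia. }
    assert (H1 : forall p q, (p <= N)%nat -> (q <= N)%nat ->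
               ~ (fst (f p) = fst (f q) + d /\ snd (f p) = snd (f q))).
    { intros p q Hp Hq [Ex Ey]. apply (Hav p q); try (unfold N in *; lia).
      unfold gsub, gofZ. unfold f in Ex, Ey. f_equal; lia. }
    set (kn := Z.to_nat k).
    assert (Ekn : Z.of_nat kn = k) by (unfold kn; lia).
    assert (Hkn : (1 <= kn)%nat) by lia.
    assert (H2 := stretch_avoid f N kn d n r Hkn Hlz ltac:(lia) ltac:(lia) H1).
    assert (H3 := chord_mult (stretch f kn) (kn * N) n hn (stretch_lazy f N kn Hkn Hlz) H2
                   (kn - 1)%nat (kn * r0) (kn * s0) ltac:(unfold N in *; nia) ltac:(unfold N in *; nia)).
    apply H3. rewrite !stretch_k by auto.
    unfold gsub, gofZ in Hrs. injection Hrs as Ex Ey. unfold f. cbn [fst snd].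
    replace (Z.of_nat (S (kn - 1))) with k by lia. rewrite Ekn. split; nia.
Qed.
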